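(* Let $m,n$ be positive integers and let $\Pi$ be an $(m,n)$-Dyck path. For a north step $N$ of $\Pi$ going from $(a,b)$ to $(a,b+1)$, define its rational diagonal \[ D(N)=\{(u,v)\in\mathbb{R}^2:\ u<a,\ \ mb-na< mv-nu\le m(b+1)-na\}, \] i.e. the region to the left of $N$ lying between the two lines of slope $n/m$ through the endpoints of $N$, including the upper line but not the lower one. Then $\operatorname{pdinv}(\Pi)$ equals the number of pairs $(N,E)$, where $N$ is a north step and $E$ is an east step of $\Pi$, such that the (closed) segment $E$ has a point in $D(N)$.
   Context: An $(m,n)$-Dyck path is a lattice path from $(0,0)$ to $(m,n)$ consisting of unit north and east steps that stays weakly above the line $y=\frac{n}{m}x$. Let $\lambda(\Pi)$ be the set of unit cells of the rectangle $[0,m]\times[0,n]$ lying above (northwest of) $\Pi$; for $c\in\lambda(\Pi)$, $\operatorname{arm}(c)$ (resp. $\operatorname{leg}(c)$) is the number of cells of $\lambda(\Pi)$ strictly east of $c$ in its row (resp. strictly south of $c$ in its column). The path dinv is \[ \operatorname{pdinv}(\Pi)=\sum_{c\in\lambda(\Pi)}\chi\left(\frac{\operatorname{arm}(c)}{\operatorname{leg}(c)+1}\le\frac{m}{n}<\frac{\operatorname{arm}(c)+1}{\operatorname{leg}(c)}\right), \] with the convention $x/0=\infty$, and $\chi(P)$ is $1$ if $P$ holds and $0$ otherwise. *)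

(* Defs.v *)
From HB Require Import structures.
From mathcomp Require Import all_boot all_order all_algebra.
From mathcomp Require Import boolp reals.
Set Implicit Arguments. Unset Strict Implicit. Unset Printing Implicit Defensive.
Import Order.TTheory GRing.Theory Num.Theory.

(* A lattice path is a sequence of steps: true = north step, false = east step. *)

(* Number of east / north steps among the first k steps: coordinates of the
   k-th vertex of the path (the path starts at (0,0)). *)
Definition xcoord (p : seq bool) (k : nat) : nat := count_mem false (take k p).
Definition ycoord (p : seq bool) (k : nat) : nat := count_mem true (take k p).

Definition dyck_path (m n : nat) (p : seq bool) : Prop :=
  count_mem true p = n /\ count_mem false p = m /\
  forall k, k <= size p -> n * xcoord p k <= m * ycoord p k.

(* Heights of the east steps: the i-th entry is the y-coordinate of the
   i-th east step (numbered from 0). *)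
Fixpoint east_heights (p : seq bool) (h : nat) : seq nat :=
  match p with
  | [::] => [::]
  | true :: q => east_heights q h.+1
  | false :: q => h :: east_heights q h
  end.

(* The unit cell [i,i+1] x [j,j+1] of [0,m] x [0,n] lies above (northwest of)
   the path iff the east step of the path in column i is at height <= j. *)
Definition in_lambda (m n : nat) (p : seq bool) (i j : nat) : bool :=
  [&& i < m, j < n & nth 0 (east_heights p 0) i <= j].

Definition arm (m n : nat) (p : seq bool) (i j : nat) : nat :=
  count (fun i' => (i < i') && in_lambda m n p i' j) (iota 0 m).

Definition leg (m n : nat) (p : seq bool) (i j : nat) : nat :=
  count (fun j' => (j' < j) && in_lambda m n p i j') (iota 0 n).

(* The chi condition  arm/(leg+1) <= m/n < (arm+1)/leg  with x/0 = infinity. *)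
Definition pdinv_cond (m n a l : nat) : bool :=
  ((a%:R / (l.+1)%:R : rat) <= m%:R / n%:R)%R &&
  ((l == 0) || ((m%:R / n%:R : rat) < (a.+1)%:R / l%:R)%R).

Definition pdinv (m n : nat) (p : seq bool) : nat :=
  \sum_(i < m) \sum_(j < n)
     (in_lambda m n p i j && pdinv_cond m n (arm m n p i j) (leg m n p i j)).

Definition rat_diag (R : realType) (m n a b : nat) (u v : R) : Prop :=
  (u < a%:R /\
  m%:R * b%:R - n%:R * a%:R < m%:R * v - n%:R * u /\
  m%:R * v - n%:R * u <= m%:R * (b.+1)%:R - n%:R * a%:R)%R.

Definition NE_pair (R : realType) (m n : nat) (p : seq bool) (k l : nat) : Prop :=
  nth false p k = true /\ nth true p l = false /\
  exists t : R, (0 <= t <= 1)%R /\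
    rat_diag m n (xcoord p k) (ycoord p k)
      ((xcoord p l)%:R + t)%R (ycoord p l)%:R.

(* Main.v *)
Require Import Defs.
From HB Require Import structures.
From mathcomp Require Import all_boot all_order all_algebra.
From mathcomp Require Import boolp reals lra.
From mathcomp Require Import zify.
Import Order.TTheory GRing.Theory Num.Theory.

Fixpoint north_xs (p : seq bool) (x : nat) : seq nat :=
  match p with
  | [::] => [::]
  | true :: q => x :: north_xs q x
  | false :: q => north_xs q x.+1
  end.

Lemma size_EH p h : size (east_heights p h) = count_mem false p.
Proof. by elim: p h => [|[] q IH] h //=; rewrite IH. Qed.

Lemma size_NX p x : size (north_xs p x) = count_mem true p.
Proof. by elim: p x => [|[] q IH] x //=; rewrite IH. Qed.

Lemma EH_ge p h i : i < size (east_heights p h) -> h <= nth 0 (east_heights p h) i.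
Proof.
elim: p h i => [|[] q IH] h i //=.
  by move=> Hi; apply: leq_trans (IH _ _ Hi).
by case: i => [|i] //= Hi; apply: IH.
Qed.

Lemma NX_ge p x j : j < size (north_xs p x) -> x <= nth 0 (north_xs p x) j.
Proof.
elim: p x j => [|[] q IH] x j //=.
  by case: j => [|j] //= Hj; apply: IH.
by move=> Hj; apply: leq_trans (IH _ _ Hj).
Qed.

Lemma NX_le p x j : nth 0 (north_xs p x) j <= x + count_mem false p.
Proof.
elim: p x j => [|[] q IH] x j /=; first by rewrite nth_nil.
  case: j => [|j] /=; first by rewrite leq_addr.
  by rewrite add0n.
by rewrite add1n addnS -addSn.
Qed.

Lemma duality p h x i j : i < count_mem false p -> j < count_mem true p ->
  (nth 0 (east_heights p h) i <= j + h) = (i + x < nth 0 (north_xs p x) j).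
Proof.
elim: p h x i j => [|[] q IH] h x i j //=.
- rewrite add0n => Hi Hj. case: j Hj => [|j] Hj /=.
    have := @EH_ge q h.+1 i; rewrite size_EH => /(_ Hi) H.
    apply/idP/idP => H2; first by lia. by lia.
  rewrite -(IH h.+1 x i j) //; by rewrite addSnnS.
- rewrite add0n => Hi Hj. case: i Hi => [|i] Hi /=.
    have := @NX_ge q x.+1 j; rewrite size_NX => /(_ Hj) H.
    rewrite leq_addl; symmetry; apply/idP; lia.
  have := IH h x.+1 i j Hi Hj. move=> ->. by rewrite addSnnS addnS.
Qed.

Lemma xcoord0 p : xcoord p 0 = 0. Proof. by case: p. Qed.
Lemma ycoord0 p : ycoord p 0 = 0. Proof. by case: p. Qed.
Lemma xcoordS b q l : xcoord (b :: q) l.+1 = (~~ b) + xcoord q l.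
Proof. by case: b. Qed.
Lemma ycoordS b q l : ycoord (b :: q) l.+1 = b + ycoord q l.
Proof. by case: b. Qed.

Lemma conv_east (F : nat -> nat -> nat) p x0 y0 :
  \sum_(l < size p) (if nth true p l then 0 else F (x0 + xcoord p l) (y0 + ycoord p l))
  = \sum_(i < count_mem false p) F (x0 + i) (nth 0 (east_heights p y0) i).
Proof.
elim: p x0 y0 => [|b q IH] x0 y0; first by rewrite !big_ord0.
rewrite big_ord_recl /= -/(size q).
under eq_bigr => l _ do rewrite /bump /= add0n xcoordS ycoordS.
case: b => /=.
  rewrite add0n.
  under eq_bigr => l _ do rewrite add0n addnA addn1.
  by rewrite IH.
under eq_bigr => l _ do rewrite add0n addnA addn1.
rewrite IH add1n big_ord_recl /= xcoord0 ycoord0 !addn0.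
  by apply: congr1; apply: eq_bigr => i _; rewrite /bump leq0n add1n add0n addSnnS.
Qed.

Lemma conv_north (G : nat -> nat -> nat) p x0 y0 :
  \sum_(k < size p) (if nth false p k then G (x0 + xcoord p k) (y0 + ycoord p k) else 0)
  = \sum_(j < count_mem true p) G (nth 0 (north_xs p x0) j) (y0 + j).
Proof.
elim: p x0 y0 => [|b q IH] x0 y0; first by rewrite !big_ord0.
rewrite big_ord_recl /= -/(size q).
under eq_bigr => l _ do rewrite /bump /= add0n xcoordS ycoordS.
case: b => /=.
  under eq_bigr => l _ do rewrite add0n addnA addn1.
  rewrite IH add1n big_ord_recl /= xcoord0 ycoord0 !addn0.
  by apply: congr1; apply: eq_bigr => i _; rewrite /bump leq0n add1n add0n addSnnS.
rewrite add0n.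
under eq_bigr => l _ do rewrite add0n addnA addn1.
by rewrite IH.
Qed.

Lemma count_interval lo hi N :
  count (fun x => (lo <= x) && (x < hi)) (iota 0 N) = minn hi N - lo.
Proof.
elim: N => [|N IH]; first by rewrite minn0.
rewrite -addn1 iotaD count_cat IH /= add0n addn0.
case: (leqP lo N) => H1; case: (ltnP N hi) => H2 /=; lia.
Qed.
Definition Phi (R : realType) m n a b c d : bool :=
  `[< exists t : R, (0 <= t <= 1)%R /\ rat_diag m n a b (c%:R + t)%R d%:R >].

Lemma pdinv_condE m n A L : 0 < m -> 0 < n ->
  pdinv_cond m n A L = (n * A <= m * L.+1) && (m * L < n * A.+1).
Proof.
move=> m0 n0; rewrite /pdinv_cond.
have n0' : (0 < n%:R :> rat)%R by rewrite ltr0n.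
have L0' : (0 < L.+1%:R :> rat)%R by rewrite ltr0n.
rewrite ler_pdivrMr // mulrAC ler_pdivlMr // -!natrM ler_nat mulnC [m * _]mulnC.
congr (_ && _).
case: L L0' => [|L] L0' /=; first by symmetry; apply/idP; lia.
have L1 : (0 < L.+1%:R :> rat)%R by rewrite ltr0n.
rewrite ltr_pdivrMr // mulrAC ltr_pdivlMr // -!natrM ltr_nat mulnC.
by rewrite [_ * n]mulnC.
Qed.

Lemma Phi_pos (R : realType) m n A L i h : 0 < m -> 0 < n ->
  Phi R m n (i + A.+1) (h + L) i h = (n * A <= m * L.+1) && (m * L < n * A.+1).
Proof.
move=> m0 n0; rewrite /Phi /rat_diag.
have n0' : (0 < n%:R :> R)%R by rewrite ltr0n.
have m0' : (0 < m%:R :> R)%R by rewrite ltr0n.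
apply/asboolP/idP.
- move=> [t [/andP [t0 t1] [H1 [H2 H3]]]].
  move: H1 H2 H3; rewrite !natrD !mulrDr => H1 H2 H3.
  have nt0 : (0 <= n%:R * t :> R)%R by rewrite mulr_ge0 // ler0n.
  have nt1 : (n%:R * t <= n%:R :> R)%R by rewrite -[X in (_ <= X)%R]mulr1 ler_wpM2l ?ler0n.
  apply/andP; split.
    rewrite -(ler_nat R) !natrM -!natr1; lra.
  rewrite -(ltr_nat R) !natrM -!natr1; lra.
- move=> /andP [Ha Hb].
  move: Ha Hb; rewrite -(ler_nat R) -(ltr_nat R) !natrM -!natr1 => Ha Hb.
  case: (lerP (n%:R * A.+1%:R) (m%:R * (L.+1)%:R : R)) => Hc.
    exists 0%R; split; first by rewrite lexx ler01.
    move: Hc Ha Hb; rewrite !natrD -!natr1 ?natrD !mulrDr ?mulr1 ?mulr0 => Hc Ha Hb.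
    have A0 : (0 <= A%:R :> R)%R by rewrite ler0n.
    split; [lra|split; lra].
  exists ((n%:R * A.+1%:R - m%:R * L.+1%:R) / n%:R)%R.
  have Ht : (n%:R * ((n%:R * A.+1%:R - m%:R * L.+1%:R) / n%:R) =
     n%:R * A.+1%:R - m%:R * L.+1%:R :> R)%R.
    by rewrite mulrC divfK // gt_eqF.
  set t := (_ / _)%R in Ht *.
  have t0 : (0 <= t)%R.
    by rewrite /t divr_ge0 ?ler0n // subr_ge0 ltW.
  have t1 : (t <= 1)%R.
    rewrite /t ler_pdivrMr // mul1r. move: Ha Hc; rewrite -!natr1; lra.
  split; first by rewrite t0 t1.
  move: Ht Ha Hb Hc; rewrite !natrD -!natr1 ?natrD !mulrDr ?mulr1 => Ht Ha Hb Hc.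
  have mL0 : (0 <= m%:R * L%:R :> R)%R by rewrite mulr_ge0 ?ler0n.
  have : (n%:R * t < n%:R * (A%:R + 1) :> R)%R by lra.
  rewrite ltr_pM2l // => H4.
  split; [lra|split; lra].
Qed.

Lemma Phi_neg (R : realType) m n a b i d : a <= i -> Phi R m n a b i d = false.
Proof.
move=> H; rewrite /Phi /rat_diag; apply/asboolP => [[t [/andP [t0 _] [H1 _]]]].
have : (a%:R <= i%:R :> R)%R by rewrite ler_nat.
lra.
Qed.
Lemma NE_pairE (R : realType) m n p k l :
  `[< NE_pair R m n p k l >] =
  [&& nth false p k, ~~ nth true p l &
      Phi R m n (xcoord p k) (ycoord p k) (xcoord p l) (ycoord p l)].
Proof.
rewrite /NE_pair /Phi.
apply/asboolP/and3P.
  by move=> [-> [-> H]]; split => //; apply/asboolP.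
by move=> [-> /negbTE -> /asboolP H].
Qed.

Theorem theorem1 (R : realType) (m n : nat) (p : seq bool) :
  0 < m -> 0 < n -> dyck_path m n p ->
  pdinv m n p =
  \sum_(k < size p) \sum_(l < size p) `[< NE_pair R m n p k l >].
Proof.
move=> m0 n0 [Hn [Hm _]].
pose G := fun a b => \sum_(l < size p)
   (if nth true p l then 0 else Phi R m n a b (0 + xcoord p l) (0 + ycoord p l)).
have E1 : \sum_(k < size p) \sum_(l < size p) `[< NE_pair R m n p k l >] =
   \sum_(k < size p) (if nth false p k then G (0 + xcoord p k) (0 + ycoord p k) else 0).
  apply: eq_bigr => k _; rewrite /G.
  case: ifP => Hk.
    apply: eq_bigr => l _; rewrite NE_pairE Hk !add0n /=.
    by case: (nth true p l).
  by apply: big1 => l _; rewrite NE_pairE Hk.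
rewrite E1 conv_north Hn /G.
under eq_bigr => j _ do rewrite (conv_east (fun c d => Phi R m n _ _ c d)) Hm.
rewrite /pdinv exchange_big /=.
apply: eq_bigr => j _; apply: eq_bigr => i _.
have Hj : j < n := ltn_ord j.
have Hi : i < m := ltn_ord i.
rewrite !add0n.
set a := nth 0 (north_xs p 0) j.
set h := nth 0 (east_heights p 0) i.
have D : forall i', i' < m -> (nth 0 (east_heights p 0) i' <= j) = (i' < a).
  move=> i' Hi'; have := @duality p 0 0 i' j; rewrite !addn0 => ->//.
    by rewrite Hm.
  by rewrite Hn.
have Ham : a <= m by have := @NX_le p 0 j; rewrite add0n Hm.
have Hlam : in_lambda m n p i j = (h <= j) by rewrite /in_lambda Hi Hj.
rewrite Hlam.
case: (leqP h j) => Hhj /=.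
- have Hia : i < a by rewrite -D.
  have Harm : arm m n p i j = a - i.+1.
    rewrite /arm -(minn_idPl Ham) -count_interval.
    apply: eq_in_count => i' /=; rewrite mem_iota add0n => /andP [_ Hi'].
    by rewrite /in_lambda Hi' Hj D.
  have Hleg : leg m n p i j = j - h.
    have -> : j - h = minn j n - h by rewrite (minn_idPl (ltnW Hj)).
    rewrite /leg -count_interval.
    apply: eq_in_count => j' /=; rewrite mem_iota add0n => /andP [_ Hj'].
    by rewrite /in_lambda Hi Hj' andbC.
  rewrite Harm Hleg pdinv_condE //.
  have E2 : i + (a - i.+1).+1 = a by lia.
  have E3 : h + (j - h) = j by lia.
  by have := @Phi_pos R m n (a - i.+1) (j - h) i h m0 n0; rewrite E2 E3 => ->.
- have Hai : a <= i by rewrite leqNgt -D // -ltnNge.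
  by rewrite (@Phi_neg R m n a j i h Hai).
Qed.
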